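(* Let $h$ be a Hermitian $2\times2$ matrix with eigenvalues $\varepsilon_0<\varepsilon_1$, and set $H_A=H_B=h$. Let $\rho=(\rho_{ij})$ be a two-qubit density matrix (basis $|00\rangle,|01\rangle,|10\rangle,|11\rangle$). (i) Let $\mu_1\le\mu_2\le\mu_3\le\mu_4$ be the diagonal entries $\rho_{11},\dots,\rho_{44}$ in ascending order and let $P$ be a permutation matrix such that $P\rho P^\dagger$ has diagonal $(\mu_4,\mu_3,\mu_2,\mu_1)$. Then $Sub_{ic}(P\rho P^\dagger)\ge Sub_{ic}(\rho)$. (ii) Let $U$ be any $4\times4$ unitary, $\tilde\rho=U\rho U^\dagger$, let $\lambda_1^A,\lambda_1^B$ be the largest eigenvalues of $\rho_A,\rho_B$, and let $\xi_1^A,\xi_1^B$ be the largest eigenvalues of $\tilde\tau_A,\tilde\tau_B$, the reduced states of the dephased state $\tilde\tau=\mathrm{diag}(\tilde\rho_{11},\tilde\rho_{22},\tilde\rho_{33},\tilde\rho_{44})$ (equivalently, the largest diagonal entries of $\tilde\rho_A,\tilde\rho_B$). If $\xi_1^A+\xi_1^B>\lambda_1^A+\lambda_1^B$, then $Sub(\tilde\rho)>Sub(\rho)$.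
   Context: Quantum battery capacity: for Hermitian $H$ on $\mathbb{C}^d$ with eigenvalues $\epsilon_0\le\dots\le\epsilon_{d-1}$ and density matrix $\rho$ with eigenvalues $\lambda_0\le\dots\le\lambda_{d-1}$, $\mathcal{C}(\rho;H)=\sum_i\epsilon_i(\lambda_i-\lambda_{d-1-i})$. For a two-qubit state $\rho$ with reduced states $\rho_A,\rho_B$: $Sub(\rho)=\mathcal{C}(\rho_A;H_A)+\mathcal{C}(\rho_B;H_B)$; the dephased state is $\tau=\mathrm{diag}(\rho_{11},\rho_{22},\rho_{33},\rho_{44})$ in the computational basis, and $Sub_{ic}(\rho)=\mathcal{C}(\tau_A;H_A)+\mathcal{C}(\tau_B;H_B)$ where $\tau_A,\tau_B$ are the reduced states of $\tau$. *)

(* Defs.v *)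
From HB Require Import structures.
From mathcomp Require Import all_boot all_order all_algebra.
From mathcomp Require Import algC sesquilinear spectral.
Set Implicit Arguments. Unset Strict Implicit. Unset Printing Implicit Defensive.
Import Order.TTheory GRing.Theory Num.Theory.
Local Open Scope ring_scope.

(* The complex scalars are an arbitrary numClosedFieldType C (e.g. the
   complex numbers R[i] over a real closed field / realType R, or algC):
   an algebraically closed field with conjugation and the standard partial
   order x <= y iff y - x is real and nonnegative. *)

Definition dag {C : numClosedFieldType} m n (A : 'M[C]_(m, n)) : 'M[C]_(n, m) := (A ^t* )%sesqui.

Definition density {C : numClosedFieldType} n (rho : 'M[C]_n) : Prop :=
  [/\ rho \is hermsymmx,
      (forall v : 'rV[C]_n, 0 <= (v *m rho *m dag v) 0 0)
    & \tr rho = 1].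

Definition roots_of {C : numClosedFieldType} (p : {poly C}) : seq C := sval (closed_field_poly_normal p).

(* The eigenvalues of a square matrix, with multiplicity (roots of the
   characteristic polynomial), listed in ascending order.  For Hermitian
   matrices they are real, so the order is total on them. *)
Definition spec {C : numClosedFieldType} n (A : 'M[C]_n) : seq C :=
  sort (fun x y : C => x <= y) (roots_of (char_poly A)).

Definition eig {C : numClosedFieldType} n (A : 'M[C]_n) (i : nat) : C := nth 0 (spec A) i.

Definition max_eig {C : numClosedFieldType} n (A : 'M[C]_n) : C := eig A n.-1.

Definition capacity {C : numClosedFieldType} d (rho H : 'M[C]_d) : C :=
  \sum_(i < d) eig H i * (eig rho i - eig rho (d.-1 - i)%N).

(* Two-qubit indexing: |ab> <-> index 2a+b, i.e. basis |00>,|01>,|10>,|11> *)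
Definition idx2 (a b : 'I_2) : 'I_4 := inord (2 * a + b).

Definition ptraceB {C : numClosedFieldType} (rho : 'M[C]_4) : 'M[C]_2 :=
  \matrix_(a < 2, a' < 2) \sum_(b < 2) rho (idx2 a b) (idx2 a' b).
Definition ptraceA {C : numClosedFieldType} (rho : 'M[C]_4) : 'M[C]_2 :=
  \matrix_(b < 2, b' < 2) \sum_(a < 2) rho (idx2 a b) (idx2 a b').

Definition redA {C : numClosedFieldType} (rho : 'M[C]_4) : 'M[C]_2 := ptraceB rho.
Definition redB {C : numClosedFieldType} (rho : 'M[C]_4) : 'M[C]_2 := ptraceA rho.

Definition dephase {C : numClosedFieldType} (rho : 'M[C]_4) : 'M[C]_4 :=
  diag_mx (\row_i rho i i).

Definition Sub_erg {C : numClosedFieldType} (HA HB : 'M[C]_2) (rho : 'M[C]_4) : C :=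
  capacity (redA rho) HA + capacity (redB rho) HB.

Definition Sub_ic {C : numClosedFieldType} (HA HB : 'M[C]_2) (rho : 'M[C]_4) : C :=
  capacity (redA (dephase rho)) HA + capacity (redB (dephase rho)) HB.

(* Main.v *)
Require Import Defs.
From HB Require Import structures.
From mathcomp Require Import all_boot all_order fingroup perm all_algebra.
From mathcomp Require Import sesquilinear spectral ring.
Import Order.TTheory GRing.Theory Num.Theory.
Local Open Scope ring_scope.

Ltac pos := repeat first [done | (rewrite subr_ge0; done) | apply: addr_ge0].
Section S.
Variable C : numClosedFieldType.

Lemma lift_I2 : (lift ord0 ord0 : 'I_2) = ord_max. Proof. exact: val_inj. Qed.

Lemma tr2 (X : 'M[C]_2) : \tr X = X ord0 ord0 + X ord_max ord_max.
Proof. by rewrite /mxtrace !big_ord_recl big_ord0 addr0 lift_I2. Qed.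

Lemma det2 (X : 'M[C]_2) : \det X = X ord0 ord0 * X ord_max ord_max - X ord0 ord_max * X ord_max ord0.
Proof.
rewrite (expand_det_row _ ord0) !big_ord_recl big_ord0 addr0 /cofactor !det_mx11 !mxE /=.
have e1 : lift ord0 (0:'I_1) = ord_max :> 'I_2 by apply: val_inj.
have e2 : lift (lift ord0 ord0) (0:'I_1) = ord0 :> 'I_2 by apply: val_inj.
rewrite e2 e1 ?lift_I2 /= expr0 expr1 mul1r; ring.
Qed.

Lemma coefXsub2 (r0 r1 : C) :
  ('X - r0%:P) * ('X - r1%:P) = 'X^2 + 'X * (- (r0 + r1))%:P + (r0 * r1)%:P.
Proof. rewrite rmorphN rmorphD rmorphM /=. ring. Qed.

Lemma spec2 (X : 'M[C]_2) : X ord0 ord0 \is Num.real -> X ord_max ord_max \is Num.real ->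
  X ord_max ord0 = (X ord0 ord_max)^* ->
  exists l0 l1, [/\ spec X = [:: l0; l1], l0 \is Num.real, l1 \is Num.real, l0 <= l1 &
     (l0 + l1 = X ord0 ord0 + X ord_max ord_max /\
      l0 * l1 = X ord0 ord0 * X ord_max ord_max - X ord0 ord_max * X ord_max ord0)].
Proof.
move=> Ra Rd Hb.
rewrite /spec /roots_of; case: (closed_field_poly_normal _) => rs /= Hp.
have mon : lead_coef (char_poly X) = 1 by apply/monicP; exact: char_poly_monic.
rewrite mon scale1r in Hp.
have := size_char_poly X; rewrite Hp size_prod_XsubC.
case: rs Hp => [|r0 [|r1 [|]]] //= Hp _.
rewrite !big_cons big_nil mulr1 coefXsub2 in Hp.
have Htr := char_poly_trace X isT; rewrite Hp /= tr2 in Htr.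
have Hdt := char_poly_det X; rewrite Hp det2 in Hdt.
rewrite !coefD coefXn coefXM coefC /= in Htr.
rewrite !coefD coefXn coefXM coefC /= in Hdt.
rewrite coefC /= add0r addr0 in Htr; move/oppr_inj: Htr => Htr.
rewrite coefC /= !add0r expr2 mulN1r opprK mul1r in Hdt.
set a := X ord0 ord0 in Ra Htr Hdt *; set d := X ord_max ord_max in Rd Htr Hdt *.
set b := X ord0 ord_max in Hb Hdt *; set c := X ord_max ord0 in Hb Hdt *.
have Rs : r0 + r1 \is Num.real by rewrite Htr realD.
have Rdf : r0 - r1 \is Num.real.
  rewrite realEsqr.
  have -> : (r0 - r1) ^+ 2 = (a - d) ^+ 2 + 4%:R * `|b| ^+ 2.
    rewrite normCK -Hb.
    have -> : (r0 - r1) ^+ 2 = (r0 + r1) ^+ 2 - 4%:R * (r0 * r1) by ring.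
    rewrite Htr Hdt; ring.
  apply: addr_ge0; last by rewrite mulr_ge0 ?exprn_ge0 ?normr_ge0 ?ler0n.
  by rewrite -realEsqr realB.
have R0 : r0 \is Num.real.
  have -> : r0 = ((r0 + r1) + (r0 - r1)) / 2%:R.
    by field.
  apply: realM; first exact: realD.
  by rewrite realV realn.
have R1 : r1 \is Num.real.
  have -> : r1 = (r0 + r1) - r0 by ring.
  by rewrite realB.
rewrite /sort /=.
case: ifP => H01 /=.
  exists r0, r1; split => //; split => //.
exists r1, r0; split => //.
  by have := real_leVge R0 R1; rewrite H01.
by split; [rewrite addrC | rewrite mulrC].
Qed.

Lemma cap2 (X h : 'M[C]_2) l0 l1 : spec X = [:: l0; l1] ->
  capacity X h = (eig h 1 - eig h 0) * (l1 - l0).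
Proof.
move=> Hs; rewrite /capacity !big_ord_recl big_ord0 /eig Hs /=; ring.
Qed.

Lemma maxeig2 (X : 'M[C]_2) l0 l1 : spec X = [:: l0; l1] -> max_eig X = l1.
Proof. by move=> Hs; rewrite /max_eig /eig Hs. Qed.

Lemma diag_le_aux (a d b l0 l1 : C) : a \is Num.real -> d \is Num.real ->
  l0 \is Num.real -> l1 \is Num.real -> l0 <= l1 -> 0 <= b ->
  l0 + l1 = a + d -> l0 * l1 = a * d - b -> a <= l1.
Proof.
move=> Ra Rd R0 R1 l01 b0 Hs Hp.
rewrite real_leNgt //; apply/negP => H.
have Hp' : (a - l1) * (d - l1) = b.
  have -> : (a - l1) * (d - l1) = a * d - (a + d) * l1 + l1 ^+ 2 by ring.
  rewrite -Hs; have -> : b = a * d - l0 * l1 by rewrite Hp; ring.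
  ring.
have H1 : 0 < a - l1 by rewrite subr_gt0.
have H2 : 0 <= d - l1 by rewrite -(pmulr_rge0 _ H1) Hp'.
have : 0 < (a - l1) + ((d - l1) + (l1 - l0)).
  by apply: ltr_pwDl => //; apply: addr_ge0 => //; rewrite subr_ge0.
have -> : (a - l1) + ((d - l1) + (l1 - l0)) = (a + d) - (l0 + l1) by ring.
by rewrite Hs subrr ltxx.
Qed.

Lemma spec2_bounds (X : 'M[C]_2) l0 l1 :
  X ord0 ord0 \is Num.real -> X ord_max ord_max \is Num.real ->
  X ord_max ord0 = (X ord0 ord_max)^* ->
  l0 \is Num.real -> l1 \is Num.real -> l0 <= l1 ->
  l0 + l1 = X ord0 ord0 + X ord_max ord_max ->
  l0 * l1 = X ord0 ord0 * X ord_max ord_max - X ord0 ord_max * X ord_max ord0 ->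
  X ord0 ord0 <= l1 /\ X ord_max ord_max <= l1.
Proof.
move=> Ra Rd Hb R0 R1 l01 Hs Hp.
have b0 : 0 <= X ord0 ord_max * X ord_max ord0 by rewrite Hb -normCK exprn_ge0.
split; first exact: (diag_le_aux _ _ _ _ _ Ra Rd R0 R1 l01 b0 Hs Hp).
apply: (diag_le_aux _ _ _ _ _ Rd Ra R0 R1 l01 b0); first by rewrite Hs addrC.
by rewrite Hp mulrC.
Qed.

Lemma spec2_diag (a d l0 l1 : C) : a \is Num.real -> d \is Num.real ->
  l0 \is Num.real -> l1 \is Num.real -> l0 <= l1 ->
  l0 + l1 = a + d -> l0 * l1 = a * d - 0 * 0 ->
  l1 - l0 = `|a - d| /\ (l1 = a \/ l1 = d).
Proof.
move=> Ra Rd R0 R1 l01 Hs Hp; rewrite mulr0 subr0 in Hp; split.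
  apply/eqP; rewrite -(eqrXn2 (n:=2)) //; last by rewrite subr_ge0.
  rewrite real_normK ?realB //; apply/eqP.
  have -> : (l1 - l0) ^+ 2 = (l0 + l1) ^+ 2 - 4%:R * (l0 * l1) by ring.
  rewrite Hs Hp; ring.
have : (l1 - a) * (l1 - d) = 0.
  have -> : (l1 - a) * (l1 - d) = l1 ^+ 2 - (a + d) * l1 + a * d by ring.
  rewrite -Hs -Hp; ring.
by move/eqP; rewrite mulf_eq0 !subr_eq0 => /orP [] /eqP ->; [left|right].
Qed.

Lemma cap_diag (X h : 'M[C]_2) : X ord0 ord0 \is Num.real -> X ord_max ord_max \is Num.real ->
  X ord0 ord_max = 0 -> X ord_max ord0 = 0 ->
  capacity X h = (eig h 1 - eig h 0) * `|X ord0 ord0 - X ord_max ord_max| /\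
  (max_eig X = X ord0 ord0 \/ max_eig X = X ord_max ord_max).
Proof.
move=> Ra Rd H01 H10.
have Hb : X ord_max ord0 = (X ord0 ord_max)^* by rewrite H01 H10 conjC0.
have [l0 [l1 [Hs R0 R1 l01 [Hsum Hp]]]] := spec2 X Ra Rd Hb.
rewrite H01 H10 in Hp.
have [E1 E2] := spec2_diag _ _ _ _ Ra Rd R0 R1 l01 Hsum Hp.
by rewrite (cap2 _ _ _ _ Hs) (maxeig2 _ _ _ Hs) E1.
Qed.

Lemma herm_entry n (M : 'M[C]_n) : M \is hermsymmx -> forall i j, M j i = (M i j)^*.
Proof.
move=> /eqP H i j; rewrite {1}H expr0 scale1r !mxE. by [].
Qed.

Lemma herm_diag_real n (M : 'M[C]_n) : M \is hermsymmx -> forall i, M i i \is Num.real.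
Proof. by move=> H i; rewrite CrealE -herm_entry. Qed.

Notation o0 := (@Ordinal 4 0 isT).
Notation o1 := (@Ordinal 4 1 isT).
Notation o2 := (@Ordinal 4 2 isT).
Notation o3 := (@Ordinal 4 3 isT).

Lemma idx00 : idx2 ord0 ord0 = o0. Proof. by apply: val_inj; rewrite /= inordK. Qed.
Lemma idx01 : idx2 ord0 ord_max = o1. Proof. by apply: val_inj; rewrite /= inordK. Qed.
Lemma idx10 : idx2 ord_max ord0 = o2. Proof. by apply: val_inj; rewrite /= inordK. Qed.
Lemma idx11 : idx2 ord_max ord_max = o3. Proof. by apply: val_inj; rewrite /= inordK. Qed.

Lemma redAE (M : 'M[C]_4) a a' : redA M a a' =
  M (idx2 a ord0) (idx2 a' ord0) + M (idx2 a ord_max) (idx2 a' ord_max).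
Proof. by rewrite /redA /ptraceB mxE !big_ord_recl big_ord0 addr0 lift_I2. Qed.
Lemma redBE (M : 'M[C]_4) b b' : redB M b b' =
  M (idx2 ord0 b) (idx2 ord0 b') + M (idx2 ord_max b) (idx2 ord_max b').
Proof. by rewrite /redB /ptraceA mxE !big_ord_recl big_ord0 addr0 lift_I2. Qed.

Lemma dephaseE (M : 'M[C]_4) i j : dephase M i j = M i i *+ (i == j).
Proof. by rewrite /dephase !mxE. Qed.

Lemma tr4 (M : 'M[C]_4) : \tr M = M o0 o0 + M o1 o1 + M o2 o2 + M o3 o3.
Proof.
rewrite /mxtrace !big_ord_recr big_ord0 /=.
have -> : (widen_ord (leqnSn 3) (widen_ord (leqnSn 2) (widen_ord (leqnSn 1) ord_max))) = o0 by apply: val_inj.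
have -> : (widen_ord (leqnSn 3) (widen_ord (leqnSn 2) ord_max)) = o1 by apply: val_inj.
have -> : (widen_ord (leqnSn 3) ord_max) = o2 by apply: val_inj.
have -> : (ord_max : 'I_4) = o3 by apply: val_inj.
by rewrite GRing.add0r.
Qed.


Lemma Sub_icE (h : 'M[C]_2) (M : 'M[C]_4) : M o0 o0 \is Num.real -> M o1 o1 \is Num.real ->
  M o2 o2 \is Num.real -> M o3 o3 \is Num.real ->
  Sub_ic h h M = (eig h 1 - eig h 0) * `|(M o0 o0 + M o1 o1) - (M o2 o2 + M o3 o3)| +
                 (eig h 1 - eig h 0) * `|(M o0 o0 + M o2 o2) - (M o1 o1 + M o3 o3)|.
Proof.
move=> HR0 HR1 HR2 HR3.
have eA00 : redA (dephase M) ord0 ord0 = M o0 o0 + M o1 o1.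
  by rewrite redAE idx00 idx01 !dephaseE !eqxx !mulr1n.
have eA11 : redA (dephase M) ord_max ord_max = M o2 o2 + M o3 o3.
  by rewrite redAE idx10 idx11 !dephaseE !eqxx !mulr1n.
have eA01 : redA (dephase M) ord0 ord_max = 0.
  by rewrite redAE idx00 idx01 idx10 idx11 !dephaseE /= !mulr0n addr0.
have eA10 : redA (dephase M) ord_max ord0 = 0.
  by rewrite redAE idx00 idx01 idx10 idx11 !dephaseE /= !mulr0n addr0.
have eB00 : redB (dephase M) ord0 ord0 = M o0 o0 + M o2 o2.
  by rewrite redBE idx00 idx10 !dephaseE !eqxx !mulr1n.
have eB11 : redB (dephase M) ord_max ord_max = M o1 o1 + M o3 o3.
  by rewrite redBE idx01 idx11 !dephaseE !eqxx !mulr1n.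
have eB01 : redB (dephase M) ord0 ord_max = 0.
  by rewrite redBE idx00 idx01 idx10 idx11 !dephaseE /= !mulr0n addr0.
have eB10 : redB (dephase M) ord_max ord0 = 0.
  by rewrite redBE idx00 idx01 idx10 idx11 !dephaseE /= !mulr0n addr0.
have rA0 : redA (dephase M) ord0 ord0 \is Num.real by rewrite eA00 realD.
have rA1 : redA (dephase M) ord_max ord_max \is Num.real by rewrite eA11 realD.
have rB0 : redB (dephase M) ord0 ord0 \is Num.real by rewrite eB00 realD.
have rB1 : redB (dephase M) ord_max ord_max \is Num.real by rewrite eB11 realD.
have [cA _] := cap_diag (redA (dephase M)) h rA0 rA1 eA01 eA10.
have [cB _] := cap_diag (redB (dephase M)) h rB0 rB1 eB01 eB10.
by rewrite /Sub_ic cA cB eA00 eA11 eB00 eB11.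
Qed.

Lemma le_by (a b s : C) : 0 <= s -> b - a = s -> a <= b.
Proof. by move=> s0 E; rewrite -subr_ge0 E. Qed.

Lemma abs_sum (x y c : C) : x \is Num.real -> y \is Num.real ->
  `|x + y| <= c -> `|x - y| <= c -> `|x| + `|y| <= c.
Proof.
move=> Rx Ry H1 H2.
have Rp : x + y \is Num.real by rewrite realD.
have Rm : x - y \is Num.real by rewrite realB.
case: (real_ge0P Rx) => hx; case: (real_ge0P Ry) => hy.
- exact: le_trans (real_ler_norm Rp) H1.
- exact: le_trans (real_ler_norm Rm) H2.
- apply: le_trans H2; rewrite -normrN; apply: le_trans (real_ler_norm _); last by rewrite rpredN.
  by rewrite opprB addrC.
- apply: le_trans H1; rewrite -normrN; apply: le_trans (real_ler_norm _); last by rewrite rpredN.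
  by rewrite opprD.
Qed.

Lemma key_ineq (d0 d1 d2 d3 e0 e1 e2 e3 : C) :
  e0 <= e1 -> e1 <= e2 -> e2 <= e3 ->
  d0 \is Num.real -> d1 \is Num.real -> d2 \is Num.real -> d3 \is Num.real ->
  (e0 <= d0 <= e3) -> (e0 <= d1 <= e3) -> (e0 <= d2 <= e3) -> (e0 <= d3 <= e3) ->
  `|(d0 + d1) - (d2 + d3)| + `|(d0 + d2) - (d1 + d3)| <=
  `|(e3 + e2) - (e1 + e0)| + `|(e3 + e1) - (e2 + e0)|.
Proof.
move=> h01 h12 h23 R0 R1 R2 R3 /andP[a0 b0] /andP[a1 b1] /andP[a2 b2] /andP[a3 b3].
have g01 : 0 <= e1 - e0 by rewrite subr_ge0.
have g12 : 0 <= e2 - e1 by rewrite subr_ge0.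
have g23 : 0 <= e3 - e2 by rewrite subr_ge0.
have p1 : 0 <= (e3 + e1) - (e2 + e0).
  apply: (le_by _ _ ((e3 - e2) + (e1 - e0))); last by ring.
  by pos.
have p2 : 0 <= (e3 + e2) - (e1 + e0).
  apply: (le_by _ _ ((e2 - e1) + (e2 - e1) + (e3 - e2) + (e1 - e0))); last by ring.
  by pos.
rewrite (ger0_norm p1) (ger0_norm p2).
have Ra : d0 + d1 - (d2 + d3) \is Num.real by rewrite realB ?realD.
have Rb : d0 + d2 - (d1 + d3) \is Num.real by rewrite realB ?realD.
apply: abs_sum => //.
  rewrite real_ler_norml; last exact: rpredD Ra Rb.
  apply/andP; split.
    apply: (le_by _ _ ((e3 - d3) + (d0 - e0) + (e3 - d3) + (d0 - e0))); last by ring.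
    by pos.
  apply: (le_by _ _ ((e3 - d0) + (d3 - e0) + (e3 - d0) + (d3 - e0))); last by ring.
  by pos.
rewrite real_ler_norml; last exact: rpredB Ra Rb.
apply/andP; split.
  apply: (le_by _ _ ((e3 - d2) + (d1 - e0) + (e3 - d2) + (d1 - e0))); last by ring.
  by pos.
apply: (le_by _ _ ((e3 - d1) + (d2 - e0) + (e3 - d1) + (d2 - e0))); last by ring.
by pos.
Qed.

Lemma herm_conj (U M : 'M[C]_4) : M \is hermsymmx -> U *m M *m dag U \is hermsymmx.
Proof.
rewrite !qualifE /= expr0 !scale1r /dag => /eqP HM; apply/eqP.
rewrite !trmx_mul !map_mxM trmxCK -HM mulmxA. by [].
Qed.

Lemma tr_conj (U M : 'M[C]_4) : U \is unitarymx -> \tr (U *m M *m dag U) = \tr M.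
Proof.
move=> /eqP HU; rewrite mxtrace_mulC mulmxA /dag (mulmx1C HU) mul1mx. by [].
Qed.

Lemma redA_herm (M : 'M[C]_4) : M \is hermsymmx -> forall a a', redA M a' a = (redA M a a')^*.
Proof. by move=> H a a'; rewrite !redAE raddfD /= -!(herm_entry _ _ H). Qed.
Lemma redB_herm (M : 'M[C]_4) : M \is hermsymmx -> forall a a', redB M a' a = (redB M a a')^*.
Proof. by move=> H a a'; rewrite !redBE raddfD /= -!(herm_entry _ _ H). Qed.

Lemma real_of_herm2 (X : 'M[C]_2) : (forall a a', X a' a = (X a a')^*) -> forall a, X a a \is Num.real.
Proof. by move=> H a; rewrite CrealE -H. Qed.

Lemma trA (M : 'M[C]_4) : redA M ord0 ord0 + redA M ord_max ord_max = \tr M.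
Proof. by rewrite !redAE idx00 idx01 idx10 idx11 tr4 !addrA. Qed.
Lemma trB (M : 'M[C]_4) : redB M ord0 ord0 + redB M ord_max ord_max = \tr M.
Proof. rewrite !redBE idx00 idx01 idx10 idx11 tr4. ring. Qed.

Lemma dA_diag (M : 'M[C]_4) a : redA (dephase M) a a = redA M a a.
Proof. by rewrite !redAE !dephaseE !eqxx !mulr1n. Qed.
Lemma dB_diag (M : 'M[C]_4) a : redB (dephase M) a a = redB M a a.
Proof. by rewrite !redBE !dephaseE !eqxx !mulr1n. Qed.
Lemma dA01 (M : 'M[C]_4) : redA (dephase M) ord0 ord_max = 0.
Proof. by rewrite redAE idx00 idx01 idx10 idx11 !dephaseE /= !mulr0n addr0. Qed.
Lemma dA10 (M : 'M[C]_4) : redA (dephase M) ord_max ord0 = 0.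
Proof. by rewrite redAE idx00 idx01 idx10 idx11 !dephaseE /= !mulr0n addr0. Qed.
Lemma dB01 (M : 'M[C]_4) : redB (dephase M) ord0 ord_max = 0.
Proof. by rewrite redBE idx00 idx01 idx10 idx11 !dephaseE /= !mulr0n addr0. Qed.
Lemma dB10 (M : 'M[C]_4) : redB (dephase M) ord_max ord0 = 0.
Proof. by rewrite redBE idx00 idx01 idx10 idx11 !dephaseE /= !mulr0n addr0. Qed.

Lemma red_info (X h : 'M[C]_2) : (forall a a', X a' a = (X a a')^*) ->
  X ord0 ord0 + X ord_max ord_max = 1 ->
  [/\ max_eig X \is Num.real,
      capacity X h = (eig h 1 - eig h 0) * (max_eig X + max_eig X - 1),
      X ord0 ord0 <= max_eig X & X ord_max ord_max <= max_eig X].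
Proof.
move=> H Ht.
have Ra := real_of_herm2 X H ord0; have Rd := real_of_herm2 X H ord_max.
have Hb := H ord0 ord_max.
have [l0 [l1 [Hs R0 R1 l01 [Hsum Hp]]]] := spec2 X Ra Rd Hb.
have [b1 b2] := spec2_bounds X l0 l1 Ra Rd Hb R0 R1 l01 Hsum Hp.
rewrite (maxeig2 _ _ _ Hs) (cap2 _ _ _ _ Hs); split => //.
congr (_ * _); rewrite Ht in Hsum; rewrite -Hsum; ring.
Qed.

Lemma map_enum4 (f : 'I_4 -> C) : [seq f i | i <- enum 'I_4] = [:: f o0; f o1; f o2; f o3].
Proof.
rewrite !enum_ordSl enum_ord0 /=.
by congr [:: f _; f _; f _; f _]; apply: val_inj.
Qed.

Lemma sort4 (d0 d1 d2 d3 : C) : d0 \is Num.real -> d1 \is Num.real ->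
  d2 \is Num.real -> d3 \is Num.real ->
  exists e0 e1 e2 e3, [/\ sort (fun x y : C => x <= y) [:: d0; d1; d2; d3] = [:: e0; e1; e2; e3],
     e0 <= e1, e1 <= e2, e2 <= e3 &
     (forall x, x \in [:: d0; d1; d2; d3] -> (e0 <= x <= e3) /\ x \is Num.real) /\
     (forall y, y \in [:: e0; e1; e2; e3] -> y \is Num.real)].
Proof.
move=> R0 R1 R2 R3.
set s := [:: d0; d1; d2; d3].
have Rs : all [pred x : C | x \is Num.real] s by rewrite /= R0 R1 R2 R3.
have tot : {in [pred x : C | x \is Num.real] &, total (fun x y : C => x <= y)}.
  by move=> x y hx hy; exact: real_leVge.
have so := sort_sorted_in tot Rs.
have pe : perm_eq (sort (fun x y : C => x <= y) s) s := permEl (perm_sort _ s).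
have sz := size_sort (fun x y : C => x <= y) s.
have memR : forall x, x \in s -> x \is Num.real.
  by move=> x; rewrite !inE => /or4P [] /eqP ->.
move: so pe sz.
case: (sort _ s) => [|e0 [|e1 [|e2 [|e3 [|]]]]] //= so pe _.
move: so => /and4P [l01 l12 l23 _].
exists e0, e1, e2, e3; split => //; split; last first.
  by move=> y ys; apply: memR; rewrite -(perm_mem pe).
move=> x xs; split; last exact: memR.
have : x \in [:: e0; e1; e2; e3] by rewrite (perm_mem pe).
rewrite !inE => /or4P [] /eqP ->; apply/andP; split.
all: try (by apply: le_trans l01 _; apply: le_trans l12 _).
all: try (by apply: le_trans l12 _).
all: try by [].
all: try (by apply: le_trans l01 _).
all: try (by apply: le_trans l12 _).
Qed.

Lemma main_aux (h : 'M[C]_2) :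
  h \is hermsymmx -> eig h 0 < eig h 1 ->
  forall rho : 'M[C]_4, density rho ->
  (forall s : 'S_4,
     let P := (perm_mx s : 'M[C]_4) in
     let rho' := P *m rho *m dag P in
     [seq rho' i i | i <- enum 'I_4] =
       rev (sort (fun x y : C => x <= y) [seq rho i i | i <- enum 'I_4]) ->
     Sub_ic h h rho <= Sub_ic h h rho')
  /\
  (forall U : 'M[C]_4, U \is unitarymx ->
     let rhot := U *m rho *m dag U in
     max_eig (redA (dephase rhot)) + max_eig (redB (dephase rhot))
       > max_eig (redA rho) + max_eig (redB rho) ->
     Sub_erg h h rhot > Sub_erg h h rho).
Proof.
move=> _ h01 rho [Hr _ Htr].
have dpos : 0 < eig h 1 - eig h 0 by rewrite subr_gt0.
split.
  move=> s P rho' Hd.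
  rewrite !map_enum4 in Hd.
  have R := herm_diag_real _ _ Hr.
  have [e0 [e1 [e2 [e3 [E l01 l12 l23 [Hb Re]]]]]] := sort4 _ _ _ _ (R o0) (R o1) (R o2) (R o3).
  rewrite E /= in Hd; case: Hd => h0 h1 h2 h3.
  have r0 : rho' o0 o0 \is Num.real by rewrite h0; apply: Re; rewrite !inE eqxx !orbT.
  have r1 : rho' o1 o1 \is Num.real by rewrite h1; apply: Re; rewrite !inE eqxx !orbT.
  have r2 : rho' o2 o2 \is Num.real by rewrite h2; apply: Re; rewrite !inE eqxx !orbT.
  have r3 : rho' o3 o3 \is Num.real by rewrite h3; apply: Re; rewrite !inE eqxx.
  rewrite (Sub_icE h rho (R o0) (R o1) (R o2) (R o3)) (Sub_icE h rho' r0 r1 r2 r3).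
  rewrite h0 h1 h2 h3 -!mulrDr; apply: ler_wpM2l; first exact: ltW.
  have [b0 _] := Hb (rho o0 o0) ltac:(by rewrite !inE eqxx).
  have [b1 _] := Hb (rho o1 o1) ltac:(by rewrite !inE eqxx !orbT).
  have [b2 _] := Hb (rho o2 o2) ltac:(by rewrite !inE eqxx !orbT).
  have [b3 _] := Hb (rho o3 o3) ltac:(by rewrite !inE eqxx !orbT).
  exact: key_ineq.
move=> U HU rhot Hlt.
have Hrt : rhot \is hermsymmx by exact: herm_conj.
have Trt : \tr rhot = 1 by rewrite /rhot tr_conj.
have [RA cA _ _] := red_info (redA rho) h (redA_herm _ Hr) (etrans (trA rho) Htr).
have [RB cB _ _] := red_info (redB rho) h (redB_herm _ Hr) (etrans (trB rho) Htr).
have [RAt cAt bA0 bA1] := red_info (redA rhot) h (redA_herm _ Hrt) (etrans (trA rhot) Trt).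
have [RBt cBt bB0 bB1] := red_info (redB rhot) h (redB_herm _ Hrt) (etrans (trB rhot) Trt).
have xA : max_eig (redA (dephase rhot)) <= max_eig (redA rhot).
  have r0 := real_of_herm2 _ (redA_herm _ Hrt) ord0.
  have r1 := real_of_herm2 _ (redA_herm _ Hrt) ord_max.
  rewrite -(dA_diag rhot) in r0; rewrite -(dA_diag rhot) in r1.
  have [_ [->|->]] := cap_diag _ h r0 r1 (dA01 rhot) (dA10 rhot); by rewrite dA_diag.
have xB : max_eig (redB (dephase rhot)) <= max_eig (redB rhot).
  have r0 := real_of_herm2 _ (redB_herm _ Hrt) ord0.
  have r1 := real_of_herm2 _ (redB_herm _ Hrt) ord_max.
  rewrite -(dB_diag rhot) in r0; rewrite -(dB_diag rhot) in r1.
  have [_ [->|->]] := cap_diag _ h r0 r1 (dB01 rhot) (dB10 rhot); by rewrite dB_diag.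
have Hlt2 := lt_le_trans Hlt (lerD xA xB).
rewrite /Sub_erg cA cB cAt cBt -subr_gt0.
set d := eig h 1 - eig h 0.
set a := max_eig (redA rho); set b := max_eig (redB rho).
set a' := max_eig (redA rhot); set b' := max_eig (redB rhot).
have -> : d * (a' + a' - 1) + d * (b' + b' - 1) - (d * (a + a - 1) + d * (b + b - 1)) =
  (d + d) * ((a' + b') - (a + b)) by ring.
apply: mulr_gt0; [exact: addr_gt0 | by rewrite subr_gt0].
Qed.
End S.

Theorem theorem2 (C : numClosedFieldType) (h : 'M[C]_2) :
  h \is hermsymmx -> eig h 0 < eig h 1 ->
  forall rho : 'M[C]_4, density rho ->
  (* (i) *)
  (forall s : 'S_4,
     let P := (perm_mx s : 'M[C]_4) in
     let rho' := P *m rho *m dag P in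
     [seq rho' i i | i <- enum 'I_4] =
       rev (sort (fun x y : C => x <= y) [seq rho i i | i <- enum 'I_4]) ->
     Sub_ic h h rho <= Sub_ic h h rho')
  /\
  (* (ii) *)
  (forall U : 'M[C]_4, U \is unitarymx ->
     let rhot := U *m rho *m dag U in
     max_eig (redA (dephase rhot)) + max_eig (redB (dephase rhot))
       > max_eig (redA rho) + max_eig (redB rho) ->
     Sub_erg h h rhot > Sub_erg h h rho).
Proof. exact: main_aux. Qed.
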